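(* Let $U$ be an infinite uniquely $2$-divisible group, $\nu$ an involutory almost regular automorphism of $U$, and let $A$ be an infinite abelian subgroup of $U$ which is inverted by $\nu$ and maximal (with respect to inclusion) among abelian subgroups of $U$ inverted by $\nu$. Let $B$ be a finitely generated abelian subgroup of $U$ which is inverted by $\nu$. Then $A$ contains a subgroup $A_1$ of finite index such that $\langle A_1,B\rangle$ is abelian.
   Context: An automorphism $\nu$ is involutory if $\nu\ne\mathrm{id}$ and $\nu^2=\mathrm{id}$, and almost regular if $C_U(\nu)$ is finite. A group is uniquely $2$-divisible if every element has a unique square root. A subgroup is inverted by $\nu$ if $x^\nu=x^{-1}$ for all its elements $x$. *)

(* Defs.v *)
From Stdlib Require Import List.
Import ListNotations.
Set Implicit Arguments.

Record Group := {
  carrier :> Type;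
  gmul : carrier -> carrier -> carrier;
  ginv : carrier -> carrier;
  gone : carrier;
  gmulA : forall x y z, gmul x (gmul y z) = gmul (gmul x y) z;
  gmul1l : forall x, gmul gone x = x;
  gmul1r : forall x, gmul x gone = x;
  gmulVl : forall x, gmul (ginv x) x = gone;
  gmulVr : forall x, gmul x (ginv x) = gone
}.

Section Defs.
Variable U : Group.

Definition finite_set (S : U -> Prop) : Prop :=
  exists l : list U, forall x, S x -> In x l.

Definition infinite_set (S : U -> Prop) : Prop := ~ finite_set S.

Definition infinite_group : Prop := infinite_set (fun _ => True).

Definition subgroup (H : U -> Prop) : Prop :=
  H (gone U) /\
  (forall x y, H x -> H y -> H (gmul U x y)) /\
  (forall x, H x -> H (ginv U x)).

Definition subset (S T : U -> Prop) : Prop := forall x, S x -> T x.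

Definition gen (S : U -> Prop) : U -> Prop :=
  fun x => forall H, subgroup H -> subset S H -> H x.

Definition abelian (S : U -> Prop) : Prop :=
  forall x y, S x -> S y -> gmul U x y = gmul U y x.

Definition finitely_generated (H : U -> Prop) : Prop :=
  exists l : list U, forall x, H x <-> gen (fun y => In y l) x.

Definition finite_index (A1 A : U -> Prop) : Prop :=
  exists l : list U, (forall a, In a l -> A a) /\
    forall x, A x -> exists a, In a l /\ exists y, A1 y /\ x = gmul U a y.

Definition uniquely_2_divisible : Prop :=
  forall x : U, exists! y : U, gmul U y y = x.

Definition automorphism (nu : U -> U) : Prop :=
  (forall x y, nu (gmul U x y) = gmul U (nu x) (nu y)) /\
  (forall x y, nu x = nu y -> x = y) /\
  (forall y, exists x, nu x = y).

Definition involutory (nu : U -> U) : Prop :=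
  (exists x, nu x <> x) /\ (forall x, nu (nu x) = x).

Definition fixed_points (nu : U -> U) : U -> Prop := fun x => nu x = x.

Definition almost_regular (nu : U -> U) : Prop := finite_set (fixed_points nu).

Definition inverted_by (nu : U -> U) (S : U -> Prop) : Prop :=
  forall x, S x -> nu x = ginv U x.

Definition abelian_inverted_subgroup (nu : U -> U) (A : U -> Prop) : Prop :=
  subgroup A /\ abelian A /\ inverted_by nu A.

Definition maximal_abelian_inverted (nu : U -> U) (A : U -> Prop) : Prop :=
  abelian_inverted_subgroup nu A /\
  forall A', abelian_inverted_subgroup nu A' -> subset A A' -> subset A' A.

Definition union2 (S T : U -> Prop) : U -> Prop := fun x => S x \/ T x.

End Defs.
Arguments finite_set {U}.
Arguments infinite_set {U}.
Arguments subgroup {U}.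
Arguments subset {U}.
Arguments gen {U}.
Arguments abelian {U}.
Arguments finitely_generated {U}.
Arguments finite_index {U}.
Arguments automorphism {U}.
Arguments involutory {U}.
Arguments fixed_points {U}.
Arguments almost_regular {U}.
Arguments inverted_by {U}.
Arguments abelian_inverted_subgroup {U}.
Arguments maximal_abelian_inverted {U}.
Arguments union2 {U}.

(* Main.v *)
Require Import Defs.
From Stdlib Require Import List Classical.
Import ListNotations.

Notation "x ** y" := (gmul _ x y) (at level 40, left associativity).
Notation "'iv' x" := (ginv _ x) (at level 30).

Lemma lcancel (U : Group) (a x y : U) : a ** x = a ** y -> x = y.
Proof.
  intro H. rewrite <- (gmul1l U x), <- (gmul1l U y), <- (gmulVl U a), <- !gmulA, H. reflexivity.
Qed.

Lemma rcancel (U : Group) (a x y : U) : x ** a = y ** a -> x = y.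
Proof.
  intro H. rewrite <- (gmul1r U x), <- (gmul1r U y), <- (gmulVr U a), !gmulA, H. reflexivity.
Qed.

Lemma inv_uniq (U : Group) (x y : U) : x ** y = gone U -> y = iv x.
Proof.
  intro H. apply (lcancel U x). rewrite H, gmulVr. reflexivity.
Qed.

Lemma inv_inv (U : Group) (x : U) : iv (iv x) = x.
Proof. symmetry. apply inv_uniq. apply gmulVl. Qed.

Lemma inv_mul (U : Group) (x y : U) : iv (x ** y) = iv y ** iv x.
Proof.
  symmetry. apply inv_uniq.
  rewrite <- !gmulA, (gmulA U y), gmulVr, gmul1l, gmulVr. reflexivity.
Qed.

Lemma inv1 (U : Group) : iv (gone U) = gone U.
Proof. symmetry. apply inv_uniq. apply gmul1l. Qed.

Lemma nu1 (U : Group) (nu : U -> U) : automorphism nu -> nu (gone U) = gone U.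
Proof.
  intros [Hm _]. apply (lcancel U (nu (gone U))). rewrite <- Hm, !gmul1r. reflexivity.
Qed.

Lemma nu_inv (U : Group) (nu : U -> U) x : automorphism nu -> nu (iv x) = iv (nu x).
Proof.
  intros Ha. apply inv_uniq. destruct Ha as [Hm Hr]. rewrite <- Hm, gmulVr.
  apply nu1. split; assumption.
Qed.

Definition comm (U : Group) (x y : U) := x ** y = y ** x.

Lemma comm_mul (U : Group) (x y z : U) : comm U x y -> comm U x z -> comm U x (y ** z).
Proof. unfold comm; intros H1 H2. rewrite gmulA, H1, <- gmulA, H2, gmulA. reflexivity. Qed.

Lemma comm_inv (U : Group) (x y : U) : comm U x y -> comm U x (iv y).
Proof.
  unfold comm; intro H. apply (lcancel U y). rewrite gmulA, <- H, <- gmulA, gmulVr, gmul1r.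
  rewrite gmulA, gmulVr, gmul1l. reflexivity.
Qed.

Lemma comm_sym (U : Group) (x y : U) : comm U x y -> comm U y x.
Proof. unfold comm; auto. Qed.

Lemma root_uniq (U : Group) (r s : U) : uniquely_2_divisible U -> r ** r = s ** s -> r = s.
Proof.
  intros H2 H. destruct (H2 (s ** s)) as [y [Hy Hu]].
  rewrite <- (Hu r H), <- (Hu s eq_refl). reflexivity.
Qed.

Definition inv_el (U : Group) (nu : U -> U) (x : U) := nu x = iv x.

Lemma decomp (U : Group) (nu : U -> U) (x : U) :
  uniquely_2_divisible U -> automorphism nu -> involutory nu ->
  exists c, nu c = c /\ inv_el U nu (x ** iv c).
Proof.
  intros H2 Ha [_ Hinv]. pose proof Ha as [Hm _].
  destruct (H2 (x ** iv (nu x))) as [i [Hi _]].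
  assert (Hyi : nu (x ** iv (nu x)) = iv (x ** iv (nu x))).
  { rewrite Hm, nu_inv, Hinv, inv_mul, inv_inv by exact Ha. reflexivity. }
  assert (Hii : nu i = iv i).
  { assert (E : iv (nu i) = i).
    { apply (root_uniq U _ _ H2). rewrite <- inv_mul, <- Hm, Hi, Hyi, inv_inv. reflexivity. }
    rewrite <- (inv_inv U (nu i)), E. reflexivity. }
  exists (iv i ** x). split.
  - rewrite Hm, nu_inv, Hii, inv_inv by exact Ha.
    apply (lcancel U i). rewrite !gmulA, gmulVr, gmul1l, Hi, <- gmulA, gmulVl, gmul1r. reflexivity.
  - unfold inv_el. rewrite inv_mul, inv_inv, gmulA, gmulVr, gmul1l. exact Hii.
Qed.

Lemma rel1 (U : Group) (nu : U -> U) (a b c : U) :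
  automorphism nu -> inv_el U nu a -> inv_el U nu b -> nu c = c ->
  inv_el U nu (a ** b ** iv c) -> a ** b = c ** b ** a ** c.
Proof.
  intros Ha Hia Hib Hc H. pose proof Ha as [Hm _]. unfold inv_el in *.
  rewrite !Hm, nu_inv, Hc, Hia, Hib, !inv_mul, inv_inv in H by exact Ha.
  (* H : iv a ** iv b ** iv c = c ** (iv b ** iv a) *)
  assert (H' : iv (iv a ** iv b ** iv c) = iv (c ** (iv b ** iv a))) by (rewrite H; reflexivity).
  rewrite !inv_mul, !inv_inv in H'.
  (* H' : c ** (b ** a) = a ** (b ** iv c) *)
  apply (rcancel U (iv c)). rewrite <- (gmulA U (c ** b ** a)), gmulVr, gmul1r.
  rewrite <- !gmulA. rewrite H'. rewrite !gmulA. reflexivity.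
Qed.

Lemma dcomm (U : Group) (nu : U -> U) (a a' b c d : U) :
  uniquely_2_divisible U -> automorphism nu -> inv_el U nu b -> nu c = c -> inv_el U nu d ->
  a ** b = c ** b ** a ** c -> a' ** b = c ** b ** a' ** c -> d ** a = a' -> comm U d b.
Proof.
  intros H2 Ha Hb Hc Hd E1 E2 Ed. pose proof Ha as [Hm _]. unfold inv_el in *.
  subst a'.
  assert (C1 : comm U d (c ** b)).
  { unfold comm. apply (rcancel U (a ** c)).
    rewrite <- (gmulA U d a b) in E2. rewrite E1 in E2.
    rewrite !gmulA in E2 |- *. rewrite (gmulA U (c ** b) d a) in E2. exact E2. }
  assert (C2 : comm U d (c ** iv b)).
  { unfold comm in *. 
    assert (E : nu (d ** (c ** b)) = nu (c ** b ** d)) by (rewrite C1; reflexivity).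
    rewrite !Hm, Hd, Hc, Hb in E.
    pose proof (comm_inv U _ _ (comm_sym U _ _ E)) as E'. unfold comm in E'.
    rewrite inv_inv in E'. symmetry. exact E'. }
  assert (C3 : comm U d (b ** b)).
  { assert (Hx : b ** b = iv (c ** iv b) ** (c ** b)).
    { rewrite inv_mul, inv_inv, <- (gmulA U b (iv c)), (gmulA U (iv c) c b), gmulVl, gmul1l. reflexivity. }
    rewrite Hx. apply comm_mul; [apply comm_inv|]; assumption. }
  unfold comm. apply (rcancel U (iv d)). rewrite <- (gmulA U b d (iv d)), gmulVr, gmul1r.
  apply (root_uniq U _ _ H2).
  transitivity (d ** (b ** b) ** iv d).
  { rewrite <- !gmulA. rewrite (gmulA U (iv d)), gmulVl, gmul1l. reflexivity. }
  unfold comm in C3. rewrite C3, <- gmulA, gmulVr, gmul1r. reflexivity.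
Qed.

Lemma keyK (U : Group) (nu : U -> U) (H : U -> Prop) (b : U) :
  uniquely_2_divisible U -> automorphism nu -> involutory nu -> almost_regular nu ->
  subgroup H -> abelian H -> inverted_by nu H -> inv_el U nu b ->
  finite_index (fun x => H x /\ comm U x b) H.
Proof.
  intros H2 Ha Hv [L HL] [H1 [HM HI]] Hab Hinv Hb.
  assert (Main : forall L', exists r, (forall a, In a r -> H a) /\
     forall x, H x -> (exists c, In c L' /\ nu c = c /\ inv_el U nu (x ** b ** iv c)) ->
     exists a, In a r /\ exists y, (H y /\ comm U y b) /\ x = a ** y).
  { induction L' as [|c L' IH].
    - exists []. split; [intros a []|]. intros x _ [c [[] _]].
    - destruct IH as [r [Hr Hcov]].
      destruct (classic (exists x0, H x0 /\ nu c = c /\ inv_el U nu (x0 ** b ** iv c)))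
        as [[x0 [Hx0 [Hc Hi]]] | Hno].
      + exists (x0 :: r). split.
        { intros a [<-|Ha']; auto. }
        intros x Hx [c' [[<-|Hin] [Hc' Hi']]].
        * exists x0. split; [left; reflexivity|].
          exists (iv x0 ** x). split; [split|].
          -- apply HM; auto.
          -- rewrite (Hab _ _ (HI _ Hx0) Hx).
             apply (dcomm U nu x0 x b c (x ** iv x0)); auto.
             ++ apply Hinv. apply HM; auto.
             ++ apply (rel1 U nu); [assumption | apply Hinv; assumption | assumption | assumption | assumption].
             ++ apply (rel1 U nu); [assumption | apply Hinv; assumption | assumption | assumption | assumption].
             ++ rewrite <- gmulA, gmulVl, gmul1r. reflexivity.
          -- rewrite gmulA, gmulVr, gmul1l. reflexivity.
        * destruct (Hcov x Hx (ex_intro _ c' (conj Hin (conj Hc' Hi')))) as [a [Ha1 Ha2]].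
          exists a. split; [right|]; assumption.
      + exists r. split; [assumption|].
        intros x Hx [c' [[<-|Hin] [Hc' Hi']]].
        * exfalso. apply Hno. exists x. auto.
        * apply Hcov; auto. exists c'. auto. }
  destruct (Main L) as [r [Hr Hcov]]. exists r. split; [assumption|].
  intros x Hx. apply Hcov; [assumption|].
  destruct (decomp U nu (x ** b) H2 Ha Hv) as [c [Hc Hi]].
  exists c. split; [apply HL; exact Hc|]. auto.
Qed.

Lemma fi_mono (U : Group) (K K' H : U -> Prop) :
  subset K K' -> finite_index K H -> finite_index K' H.
Proof.
  intros Hs [l [Hl Hc]]. exists l. split; [assumption|].
  intros x Hx. destruct (Hc x Hx) as [a [Ha [y [Hy E]]]]. exists a. split; [assumption|].
  exists y. split; [apply Hs|]; assumption.
Qed.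

Lemma fi_trans (U : Group) (K H A : U -> Prop) :
  finite_index K H -> finite_index H A -> (forall x y, A x -> A y -> A (x ** y)) ->
  subset H A -> finite_index K A.
Proof.
  intros [l1 [Hl1 Hc1]] [l2 [Hl2 Hc2]] HM Hs.
  exists (flat_map (fun a => map (fun h => a ** h) l1) l2). split.
  - intros z Hz. apply in_flat_map in Hz. destruct Hz as [a [Ha Hz]].
    apply in_map_iff in Hz. destruct Hz as [h [<- Hh]]. apply HM; auto.
  - intros x Hx. destruct (Hc2 x Hx) as [a [Ha [y [Hy ->]]]].
    destruct (Hc1 y Hy) as [h [Hh [z [Hz ->]]]].
    exists (a ** h). split.
    + apply in_flat_map. exists a. split; [assumption|]. apply in_map. assumption.
    + exists z. split; [assumption|]. apply gmulA.
Qed.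

Lemma comm_subgroup (U : Group) (x : U) : subgroup (fun y => comm U x y).
Proof.
  split; [|split].
  - unfold comm. rewrite gmul1l, gmul1r. reflexivity.
  - intros; apply comm_mul; assumption.
  - intros; apply comm_inv; assumption.
Qed.

Lemma comm_subgroup' (U : Group) (x : U) : subgroup (fun y => comm U y x).
Proof.
  split; [|split].
  - unfold comm. rewrite gmul1l, gmul1r. reflexivity.
  - intros; apply comm_sym, comm_mul; apply comm_sym; assumption.
  - intros; apply comm_sym, comm_inv; apply comm_sym; assumption.
Qed.

Theorem lemma3p2 (U : Group) (nu : U -> U) (A B : U -> Prop) :
  infinite_group U ->
  uniquely_2_divisible U ->
  automorphism nu -> involutory nu -> almost_regular nu ->
  maximal_abelian_inverted nu A -> infinite_set A ->
  subgroup B -> abelian B -> inverted_by nu B -> finitely_generated B ->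
  exists A1 : U -> Prop,
    subgroup A1 /\ subset A1 A /\ finite_index A1 A /\
    abelian (gen (union2 A1 B)).
Proof.
  intros _ H2 Ha Hv Hr [[[A1' [AM AI]] [Aab Ainv]] _] _ HB Bab Binv [l Hl].
  assert (Hli : forall b, In b l -> B b).
  { intros b Hb. apply Hl. intros G _ HG. apply HG. exact Hb. }
  assert (Hfi : forall l', (forall b, In b l' -> inv_el U nu b) ->
            finite_index (fun x => A x /\ forall b, In b l' -> comm U x b) A).
  { induction l' as [|b l' IH]; intros Hinv.
    - exists [gone U]. split.
      + intros a [<-|[]]. exact A1'.
      + intros x Hx. exists (gone U). split; [left; reflexivity|].
        exists x. split; [split; [assumption | intros b []]|]. symmetry; apply gmul1l.
    - assert (IH' := IH (fun b' Hb' => Hinv b' (or_intror Hb'))).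
      set (H := fun x => A x /\ forall b, In b l' -> comm U x b) in *.
      apply (fi_trans U _ H A); [| exact IH' | exact AM | intros x [Hx _]; exact Hx].
      apply (fi_mono U (fun x => H x /\ comm U x b)).
      { intros x [[Hx Hc] Hb]. split; [assumption|]. intros b' [<-|Hb']; auto. }
      apply (keyK U nu); auto.
      + split; [|split].
        * split; [assumption|]. intros b' _. unfold comm. rewrite gmul1l, gmul1r. reflexivity.
        * intros x y [Hx Hcx] [Hy Hcy]. split; [apply AM; assumption|].
          intros b' Hb'. apply comm_sym, comm_mul; apply comm_sym; auto.
        * intros x [Hx Hcx]. split; [apply AI; assumption|].
          intros b' Hb'. apply comm_sym, comm_inv; apply comm_sym; auto.
      + intros x y [Hx _] [Hy _]. apply Aab; assumption.
      + intros x [Hx _]. apply Ainv; assumption.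
      + apply Hinv. left; reflexivity. }
  exists (fun x => A x /\ forall b, B b -> comm U x b). split; [|split; [|split]].
  - split; [|split].
    + split; [assumption|]. intros b' _. unfold comm. rewrite gmul1l, gmul1r. reflexivity.
    + intros x y [Hx Hcx] [Hy Hcy]. split; [apply AM; assumption|].
      intros b' Hb'. apply comm_sym, comm_mul; apply comm_sym; auto.
    + intros x [Hx Hcx]. split; [apply AI; assumption|].
      intros b' Hb'. apply comm_sym, comm_inv; apply comm_sym; auto.
  - intros x [Hx _]; exact Hx.
  - apply (fi_mono U (fun x => A x /\ forall b, In b l -> comm U x b)).
    + intros x [Hx Hc]. split; [assumption|]. intros b Hb.
      apply Hl in Hb. apply Hb; [apply comm_subgroup|]. intros y Hy. apply Hc; exact Hy.
    + apply Hfi. intros b Hb. apply Binv, Hli, Hb.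
  - assert (Hpair : forall s t, union2 (fun x => A x /\ forall b, B b -> comm U x b) B s ->
                      union2 (fun x => A x /\ forall b, B b -> comm U x b) B t -> comm U s t).
    { intros s t [[Hs Hcs]|Hs] [[Ht Hct]|Ht].
      - apply Aab; assumption.
      - apply Hcs; assumption.
      - apply comm_sym, Hct; assumption.
      - apply Bab; assumption. }
    assert (Hstep : forall s y, union2 (fun x => A x /\ forall b, B b -> comm U x b) B s ->
                      gen (union2 (fun x => A x /\ forall b, B b -> comm U x b) B) y -> comm U s y).
    { intros s y Hs Hy. apply Hy; [apply comm_subgroup|]. intros t Ht. apply Hpair; assumption. }
    intros x y Hx Hy. change (comm U x y).
    apply Hx; [apply comm_subgroup'|]. intros s Hs. apply Hstep; assumption.
Qed.
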